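(* Let $r \ge 3$ be an integer, let $n \ge 1$, and let $q$ be a prime power with $q \ge n$. Let $g^{q\text{-}\mathrm{ff}}_r(n)$ be the maximum cardinality of a family $\mathcal{F} \subseteq [q]^n$ containing no $q$-ary focal family of size $r$. Then $g^{q\text{-}\mathrm{ff}}_r(n) \ge q^{\lceil \frac{(r-2)n}{r-1} \rceil}$.
   Context: Here $[q]=\{1,\dots,q\}$. A family $x^{(0)}, x^{(1)}, \dots, x^{(r-1)}$ of $r$ distinct vectors in $[q]^n$ is a ($q$-ary) focal family with focus $x^{(0)}$ if for every coordinate $i \in [n]$, at least $r-2$ of the $r-1$ entries $x^{(1)}_i, \dots, x^{(r-1)}_i$ are equal to $x^{(0)}_i$. A family contains a focal family of size $r$ if some $r$ distinct members, with some choice of focus among them, form a focal family. *)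

(* Defs.v *)
From mathcomp Require Import all_boot.
Set Implicit Arguments. Unset Strict Implicit. Unset Printing Implicit Defensive.

(* [q]^n is modelled as {ffun 'I_n -> 'I_q} (symbols 0..q-1 instead of 1..q). *)
Definition qvec (q n : nat) := {ffun 'I_n -> 'I_q}.

Definition is_focal (q n : nat) (S : {set qvec q n}) (x0 : qvec q n) : bool :=
  (x0 \in S) &&
  [forall i : 'I_n, #|S| - 2 <= #|[set y in S :\ x0 | y i == x0 i]|].

Definition has_focal (q n r : nat) (F : {set qvec q n}) : bool :=
  [exists S : {set qvec q n},
     [&& S \subset F, #|S| == r & [exists x0 in S, is_focal S x0]]].

Definition g_qff (q r n : nat) : nat :=
  \max_(F : {set qvec q n} | ~~ has_focal r F) #|F|.

Definition prime_power (q : nat) : Prop :=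
  exists p k : nat, [/\ prime p, 0 < k & q = p ^ k].

Definition ceil_div (a b : nat) : nat := (a + b - 1) %/ b.

(* Main.v *)
Require Import Defs.
From mathcomp Require Import all_boot all_algebra all_field.
From mathcomp Require Import zify.
Set Implicit Arguments. Unset Strict Implicit. Unset Printing Implicit Defensive.
Import GRing.Theory.

Lemma noFocal q n r (F : {set qvec q n}) : 3 <= r ->
 (forall x y, x \in F -> y \in F -> x != y -> n < (r-1) * #|[set i | x i != y i]|) ->
 ~~ has_focal r F.
Proof.
move=> r3 HF; apply/existsP => [[S /and3P [sSF /eqP cS /existsP [x0 /andP [x0S /andP [_ /forallP H]]]]]].
set T := S :\ x0.
have cT : #|T| = r - 1 by rewrite (cardsD1 x0 S) x0S in cS; rewrite /T; lia.
have up : \sum_(y in T) #|[set i | y i != x0 i]| <= n.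
  have -> : \sum_(y in T) #|[set i | y i != x0 i]| =
            \sum_(i : 'I_n) #|[set y in T | y i != x0 i]|.
    rewrite (eq_bigr (fun y : qvec q n => \sum_(i : 'I_n) (y i != x0 i : nat))); last first.
      by move=> y _; rewrite -sum1_card big_mkcond; apply: eq_bigr => i _; rewrite inE; case: (_ != _).
    rewrite exchange_big; apply: eq_bigr => i _.
    rewrite -sum1_card big_mkcond /= [RHS]big_mkcond /=; apply: eq_bigr => y _; rewrite !inE.
    by case: ((y != x0) && (y \in S)); case: (y i != x0 i).
  apply: (@leq_trans (\sum_(i : 'I_n) 1)); last by rewrite sum1_card card_ord.
  apply: leq_sum => i _.
  have E : [set y in T | y i != x0 i] = T :\: [set y in T | y i == x0 i].
    by apply/setP => y; rewrite !inE; case: (y \in S); case: (y == x0); case: (_ == _).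
  rewrite E cardsDS; last by apply/subsetP => y; rewrite inE => /andP [].
  have := H i; rewrite -/T cS cT => h; rewrite leq_subLR addnC.
  apply: leq_trans (_ : r - 1 <= (r - 2) + 1) _; first lia.
  by rewrite [X in _ <= X]addnC leq_add2r.
have low : \sum_(y in T) (n.+1) <= \sum_(y in T) (r - 1) * #|[set i | y i != x0 i]|.
  apply: leq_sum => y yT; apply: HF.
  - by case/setD1P: yT => _; apply: (subsetP sSF).
  - exact: (subsetP sSF).
  - by case/setD1P: yT.
rewrite sum_nat_const cT -big_distrr /= in low.
have : (r - 1) * \sum_(y in T) #|[set i | y i != x0 i]| <= (r - 1) * n by rewrite leq_mul2l up orbT.
move=> h; have := leq_trans low h; rewrite leq_mul2l ltnn orbF; lia.
Qed.

Section RS.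
Local Open Scope ring_scope.
Variables (K : fieldType) (q n k : nat) (ev : 'I_n -> K) (toI : K -> 'I_q).
Hypotheses (evI : injective ev) (toII : injective toI).

Definition enc (m : {ffun 'I_k -> K}) : qvec q n :=
  [ffun i => toI (\sum_(j < k) m j * ev i ^+ j)].

Lemma enc_agree m m' : m != m' -> (#|[set i | enc m i == enc m' i]| < k)%N.
Proof.
move=> mm.
pose E (j : nat) := odflt 0 (omap (fun j' : 'I_k => m j' - m' j') (insub j)).
have EE (j : 'I_k) : E j = m j - m' j by rewrite /E valK.
pose p : {poly K} := \poly_(j < k) E j.
have p0 : p != 0.
  apply: contra mm => /eqP p0; apply/eqP/ffunP => j.
  have := coef_poly k E j; rewrite -/p p0 coef0 ltn_ord EE => /esym/eqP.
  by rewrite subr_eq0 => /eqP.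
set A := [set i | _].
have := max_poly_roots p0 (rs := map ev (enum A)).
rewrite size_map -cardE map_inj_uniq // enum_uniq => /(_ _ isT) H.
apply: leq_trans (H _) (size_poly _ _).
apply/allP => x /mapP [i]; rewrite mem_enum inE ffunE ffunE => /eqP /toII e ->.
rewrite /root horner_poly; under eq_bigr do rewrite EE mulrBl.
by rewrite sumrB e subrr.
Qed.
End RS.

Theorem proposition3p2 (r n q : nat) :
  3 <= r -> 1 <= n -> prime_power q -> n <= q ->
  q ^ (ceil_div ((r - 2) * n) (r - 1)) <= g_qff q r n.
Proof.
move=> r3 n1 [p [e [pp e0 qE]]] nq.
have [K _ cK] := pPrimePowerField pp e0.
rewrite -qE in cK.
set k := ceil_div _ _.
have kdiv : (r - 1) * k <= (r - 2) * n + (r - 1) - 1.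
  by rewrite mulnC; apply: leq_trunc_div.
have kn : k <= n by nia.
have nK : n <= #|K| by rewrite cK.
pose ev (i : 'I_n) : K := enum_val (widen_ord nK i).
pose toI (x : K) : 'I_q := cast_ord cK (enum_rank x).
have evI : injective ev.
  by move=> i j /enum_val_inj /(congr1 val) /= /val_inj.
have toII : injective toI.
  by move=> x y /cast_ord_inj /enum_rank_inj.
have encI : injective (@enc K q n k ev toI).
  move=> m m' E; apply/eqP; apply: contraT => mm.
  have := enc_agree evI toII mm; rewrite E.
  have -> : [set i | enc ev toI m' i == enc ev toI m' i] = setT by apply/setP => i; rewrite !inE eqxx.
  by rewrite cardsT card_ord ltnNge kn.
pose F := [set enc ev toI m | m : {ffun 'I_k -> K}].
have cF : #|F| = q ^ k by rewrite card_imset // card_ffun cK card_ord.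
rewrite -cF; apply: leq_bigmax_cond.
apply: noFocal => // x y /imsetP [m _ ->] /imsetP [m' _ ->] xy.
have mm : m != m' by apply: contra xy => /eqP ->.
have := enc_agree evI toII mm.
have -> : [set i | enc ev toI m i != enc ev toI m' i] = ~: [set i | enc ev toI m i == enc ev toI m' i].
  by apply/setP => i; rewrite !inE.
rewrite cardsCs card_ord.
move: (#|_|) => a ha.
nia.
Qed.
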